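(* Let $\theta_0\in\mathbb{R}$, let $\hat\theta_u$ and $\hat\theta_b'$ be real random variables with finite second moments such that $\mathbb{E}[\hat\theta_u]=\theta_0$ and $\mathbb{E}[\hat\theta_b']=\theta_0$, and let $(\mu_k)_{k\ge1}$ be a sequence of real numbers with $\mu_k\to\infty$ as $k\to\infty$. Define $\hat\theta_b^{(k)}=\hat\theta_b'+\mu_k$, so that $\mathrm{Var}(\hat\theta_b^{(k)})=\sigma^2_b:=\mathrm{Var}(\hat\theta_b')$ and $\mathrm{Cov}(\hat\theta_b^{(k)},\hat\theta_u)=\sigma_{bu}:=\mathrm{Cov}(\hat\theta_b',\hat\theta_u)$ for all $k$. Let $\sigma^2_u=\mathrm{Var}(\hat\theta_u)$ and assume $\sigma^2_u>0$ and $\sigma^2_u+\sigma^2_b-2\sigma_{bu}>0$. For each $k$ define $$\hat\lambda^{(k)}=\frac{\sigma^2_u-\sigma_{bu}}{(\hat\theta_u-\hat\theta_b^{(k)})^2+\sigma^2_u+\sigma^2_b-2\sigma_{bu}},\qquad \hat\theta_{\hat\lambda}^{(k)}=\hat\lambda^{(k)}\hat\theta_b^{(k)}+(1-\hat\lambda^{(k)})\hat\theta_u .$$ Then $$\lim_{k\to\infty}\mathbb{E}\big[(\hat\theta_{\hat\lambda}^{(k)}-\theta_0)^2\big]=\sigma^2_u .$$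
   Context: $\hat\theta_u$ is an unbiased estimator of $\theta_0$, and $\hat\theta_b^{(k)}$ is a biased estimator with bias $\mu_k$; $\hat\theta_{\hat\lambda}^{(k)}$ is the combination estimator formed with known variances and covariance. *)

(* Defs.v *)
From HB Require Import structures.
From mathcomp Require Import all_boot all_order all_algebra.
From mathcomp Require Import all_classical all_reals all_analysis.
Set Implicit Arguments. Unset Strict Implicit. Unset Printing Implicit Defensive.
Import Order.TTheory GRing.Theory Num.Theory.
Local Open Scope ring_scope.

Definition theta_b {T : Type} {R : realType} (thb' : T -> R) (mu : R) : T -> R :=
  fun w => thb' w + mu.

Definition lambda_hat {T : Type} {R : realType} (su2 sb2 sbu : R)
  (thu thb : T -> R) : T -> R :=
  fun w => (su2 - sbu) / ((thu w - thb w) ^+ 2 + su2 + sb2 - 2 * sbu).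

Definition theta_lambda {T : Type} {R : realType} (su2 sb2 sbu : R)
  (thu thb : T -> R) : T -> R :=
  fun w => lambda_hat su2 sb2 sbu thu thb w * thb w
           + (1 - lambda_hat su2 sb2 sbu thu thb w) * thu w.

(* Main.v *)
Require Import Defs.
From HB Require Import structures.
From mathcomp Require Import all_boot all_order all_algebra.
From mathcomp Require Import all_classical all_reals all_analysis.
From mathcomp Require Import ring lra.
Import measurable_realfun.
Import Order.TTheory GRing.Theory Num.Theory.
Import numFieldNormedType.Exports.
Local Open Scope classical_set_scope.
Local Open Scope ring_scope.
Section aux.
Context {R : realType}.

Definition phi (s1 s2 s3 x : R) := (s1 - s3) / (x ^+ 2 + s1 + s2 - 2 * s3).

Lemma phi_den (s1 s2 s3 x : R) : 0 < s1 + s2 - 2 * s3 ->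
  0 < x ^+ 2 + s1 + s2 - 2 * s3.
Proof.
move=> h; have -> : x ^+ 2 + s1 + s2 - 2 * s3 = x ^+ 2 + (s1 + s2 - 2 * s3) by ring.
by rewrite ltr_wpDl // sqr_ge0.
Qed.

Lemma phi_cont (s1 s2 s3 : R) : 0 < s1 + s2 - 2 * s3 -> continuous (phi s1 s2 s3).
Proof.
move=> h x; rewrite /phi.
apply: cvgM; first exact: cvg_cst.
apply: cvgV; first by rewrite gt_eqF // phi_den.
apply: cvgB; last exact: cvg_cst.
apply: cvgD; last exact: cvg_cst.
apply: cvgD; last exact: cvg_cst.
exact: exprn_continuous.
Qed.

Lemma phi_bound (s1 s2 s3 x : R) : 0 < s1 + s2 - 2 * s3 ->
  `|phi s1 s2 s3 x * x| <= `|s1 - s3| * (1 + (s1 + s2 - 2 * s3)^-1).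
Proof.
move=> h; set c := s1 + s2 - 2 * s3.
have hd := phi_den s1 s2 s3 x h.
have E : x ^+ 2 + s1 + s2 - 2 * s3 = x ^+ 2 + c by rewrite /c; ring.
rewrite E in hd; rewrite /phi E.
rewrite -mulrA normrM ler_wpM2l //.
rewrite normrM normfV (gtr0_norm hd) mulrC ler_pdivrMr //.

have h1 : `|x| <= x ^+ 2 + 1.
  case: (lerP `|x| 1) => hx.
    by rewrite (le_trans hx) // lerDr sqr_ge0.
  rewrite -(real_normK (num_real x)); nra.
apply: (le_trans h1).
have hc : 0 < c^-1 by rewrite invr_gt0.
rewrite mulrDl mul1r mulrDr [c^-1 * c]mulrC mulfV ?gt_eqF // [c^-1 * _]mulrC.
have : 0 <= x ^+ 2 * c^-1 by rewrite mulr_ge0 // ?sqr_ge0 ?ltW.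
lra.
Qed.


Lemma phi_small (s1 s2 s3 e y : R) : 0 < s1 + s2 - 2 * s3 -> 0 < e ->
  `|s1 - s3| / e + 1 <= `|y| -> `|phi s1 s2 s3 y * y| < e.
Proof.
move=> h e0 hy; set c := s1 + s2 - 2 * s3.
have hd := phi_den s1 s2 s3 y h.
have E : y ^+ 2 + s1 + s2 - 2 * s3 = y ^+ 2 + c by rewrite /c; ring.
rewrite E in hd; rewrite /phi E.
rewrite mulrAC normrM normfV (gtr0_norm hd) ltr_pdivrMr // normrM.
set a := `|s1 - s3|; set n := `|y|.
have a0 : 0 <= a by apply: normr_ge0.
have y2 : y ^+ 2 = n ^+ 2 by rewrite /n real_normK // num_real.
have hy' : a + e <= e * n.
  move: hy; rewrite -(ler_pM2l e0) mulrDr mulr1 mulrCA mulfV ?gt_eqF // mulr1.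
  by [].
rewrite y2.
have c0 : 0 < c by [].
have n0 : 0 < n by apply: lt_le_trans hy; rewrite ltr_wpDl // divr_ge0 // ltW.
nra.
Qed.

Lemma phi_lim (s1 s2 s3 x0 : R) (mu : nat -> R) : 0 < s1 + s2 - 2 * s3 ->
  mu @ \oo --> +oo ->
  (fun k => phi s1 s2 s3 (x0 - mu k) * (x0 - mu k)) @ \oo --> 0.
Proof.
move=> h /cvgryPge hmu.
apply/cvgrPdist_lt => e e0.
have := hmu (x0 + `|s1 - s3| / e + 1).
apply: filterS => k hk.
rewrite sub0r normrN; apply: phi_small => //.
have q : 0 <= `|s1 - s3| / e by rewrite divr_ge0 // ltW.
rewrite [`|x0 - mu k|]ler0_norm; last by move: hk q; lra.
rewrite opprB; move: hk; lra.
Qed.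

End aux.

Theorem proposition1 (d : measure_display) (T : measurableType d) (R : realType)
  (P : probability T R) (theta0 : R) (thu thb' : {RV P >-> R}) (mu : nat -> R) :
  (thu : T -> R) \in Lfun P 2%:E ->
  (thb' : T -> R) \in Lfun P 2%:E ->
  ('E_P[thu] = theta0%:E)%E ->
  ('E_P[thb'] = theta0%:E)%E ->
  mu @ \oo --> +oo ->
  let su2 := fine ('V_P[thu])%E in
  let sb2 := fine ('V_P[thb'])%E in
  let sbu := fine (covariance P thb' thu) in
  0 < su2 ->
  0 < su2 + sb2 - 2 * sbu ->
  (fun k : nat =>
     ('E_P[fun w => ((theta_lambda su2 sb2 sbu thu (theta_b thb' (mu k)) w
                    - theta0) ^+ 2)%R])%E)
    @ \oo --> ('V_P[thu])%E.
Proof.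
move=> Lu Lb Eu Eb hmu su2 sb2 sbu su0 hc.
set U := fun w => thu w - theta0.
set Dk := fun k w => thu w - thb' w - mu k.
set K := `|su2 - sbu| * (1 + (su2 + sb2 - 2 * sbu)^-1).
have key k w : theta_lambda su2 sb2 sbu thu (theta_b thb' (mu k)) w - theta0
    = U w - phi su2 sb2 sbu (Dk k w) * Dk k w.
  rewrite /theta_lambda /lambda_hat /theta_b /phi /U /Dk.
  have -> : thu w - (thb' w + mu k) = thu w - thb' w - mu k by ring.
  ring.
have mthu : measurable_fun setT (thu : T -> R) by [].
have mthb : measurable_fun setT (thb' : T -> R) by [].
have Vu : 'V_P[thu] = (\int[P]_w ((U w) ^+ 2)%:E)%E.
  rewrite /variance covariance.unlock Eu /= expectation.unlock.
  apply: eq_integral => w _ /=; by rewrite expr2.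
rewrite Vu expectation.unlock.
have mD k : measurable_fun setT (Dk k).
  by apply: measurable_funB; [exact: measurable_funB|exact: measurable_cst].
have mU : measurable_fun setT U by apply: measurable_funB => //; exact: measurable_cst.
have bnd k w : `|phi su2 sb2 sbu (Dk k w) * Dk k w| <= K by exact: phi_bound.
apply: (@dominated_cvg _ _ _ P setT measurableT
  (fun k w => ((theta_lambda su2 sb2 sbu thu (theta_b thb' (mu k)) w - theta0) ^+ 2)%:E)
  (fun w => (U w ^+ 2)%:E) (fun w => (2 * U w ^+ 2 + 2 * K ^+ 2)%:E)).
- move=> n; apply/measurable_EFinP.
  rewrite (_ : (fun w => _) = (fun w => (U w - phi su2 sb2 sbu (Dk n w) * Dk n w) ^+ 2)); last first.
    by apply/funext => w; rewrite key.
  apply: measurable_funX; apply: measurable_funB => //.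
  apply: measurable_funM => //.
  apply: measurableT_comp => //.
  exact: continuous_measurable_fun (phi_cont _ _ _ hc).
- move=> x _; apply: cvg_EFin; first exact: nearW.
  rewrite (_ : fine \o _ = (fun k => (U x - phi su2 sb2 sbu (Dk k x) * Dk k x) ^+ 2)); last first.
    by apply/funext => k; rewrite /= key.
  have L : (fun k => U x - phi su2 sb2 sbu (Dk k x) * Dk k x) @ \oo --> U x - 0.
    apply: cvgB; first exact: cvg_cst.
    exact: phi_lim.
  rewrite subr0 in L.
  rewrite [X in _ --> X]expr2.
  exact: cvgM.
- by [].
- have LU : ((thu : T -> R) \- cst theta0)%R \in Lfun P 2%:E.
    apply: rpredB => //; [by rewrite lee_fin ler1n | move=> ?; exact: Lfun_cst].
  have iU2 := Lfun2_integrable_sqr LU.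
  apply: (eq_integrable measurableT (fun w => (2%:E * (EFin \o (fun x => (((thu : T -> R) \- cst theta0) x ^+ 2)%R)) w
      + (EFin \o cst (2 * K ^+ 2)%R) w)%E)).
    by move=> w _; rewrite /= EFinD EFinM.
  apply: integrableD => //; first exact: integrableZl.
  exact: finite_measure_integrable_cst.
- move=> n x _.
  rewrite key /= lee_fin ger0_norm ?sqr_ge0 //.
  have := bnd n x.
  set z := phi su2 sb2 sbu (Dk n x) * Dk n x.
  have z2 : z ^+ 2 = `|z| ^+ 2 by rewrite real_normK // num_real.
  have z0 : 0 <= `|z| by [].
  move=> hz.
  have zK : z ^+ 2 <= K ^+ 2 by rewrite z2; nra.
  have := sqr_ge0 (U x + z).
  set u := U x; move: zK; clearbody z u; clear -u z; nra.
Qed.
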